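(* Let $A\in\mathcal A$ and $k\ge1$, and let $B_A(\cdot;k)$ be its $k$-th degree Bernstein polynomial. Assume that ${\boldsymbol w}\mapsto B_A({\boldsymbol w};k)$ is convex on $\mathcal S_{d-1}$ and that $B_A({\boldsymbol v}_j;k)=1$ for all $j\in\{0,\dots,d-1\}$. Then $$B_A({\boldsymbol w};k)\ge\max(w_1,\dots,w_d)\ \text{ for all }{\boldsymbol w}\in\mathcal S_{d-1}\iff D_{{\boldsymbol v}_i-{\boldsymbol v}_j}B_A({\boldsymbol v}_j;k)\ge-1\ \text{ for all }(i,j)\in\{0,\dots,d-1\}^2,\ i\ne j.$$
   Context: $d\ge2$; $\mathcal S_{d-1}=\{(w_1,\dots,w_{d-1})\in[0,1]^{d-1}:\sum w_i\le1\}\subset\mathbb R^{d-1}$, $w_d=1-w_1-\dots-w_{d-1}$. $\mathcal A$ is the family of convex functions $A:\mathcal S_{d-1}\to[1/d,1]$ with $\max(w_1,\dots,w_d)\le A({\boldsymbol w})\le1$. $\Gamma_k$ is the set of ${\boldsymbol\alpha}\in\{0,\dots,k\}^{d-1}$ with $\sum\alpha_i\le k$, $\alpha_d=k-\sum_{i<d}\alpha_i$; $b_{\boldsymbol\alpha}({\boldsymbol w};k)=\frac{k!}{\alpha_1!\cdots\alpha_d!}\prod_{i=1}^dw_i^{\alpha_i}$ and $B_A({\boldsymbol w};k)=\sum_{{\boldsymbol\alpha}\in\Gamma_k}A({\boldsymbol\alpha}/k)b_{\boldsymbol\alpha}({\boldsymbol w};k)$ (a polynomial, hence defined on all of $\mathbb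 R^{d-1}$). The vertices are ${\boldsymbol v}_0={\bf 0}$ and ${\boldsymbol v}_r={\boldsymbol e}_r$ (canonical unit vector of $\mathbb R^{d-1}$), $r=1,\dots,d-1$. For ${\boldsymbol u}\in\mathbb R^{d-1}$, $D_{\boldsymbol u}B({\boldsymbol w};k)={\boldsymbol u}^\top\nabla B({\boldsymbol w};k)$ denotes the directional derivative. *)

(* Defs.v *)
From Stdlib Require Import Reals Lra Lia List Arith.
Import ListNotations.
Open Scope R_scope.

(* Points of R^(d-1) are represented as functions nat -> R; coordinate w_{i+1}
   of the paper is [w i] for i < d-1.  Points of the simplex are required to
   vanish at indices >= d-1, so S_{d-1} is faithfully embedded. *)

Fixpoint sumR (n : nat) (f : nat -> R) : R :=
  match n with O => 0 | S m => sumR m f + f m end.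

Fixpoint prodR (n : nat) (f : nat -> R) : R :=
  match n with O => 1 | S m => prodR m f * f m end.

(* w_d = 1 - w_1 - ... - w_{d-1} *)
Definition wlast (d : nat) (w : nat -> R) : R := 1 - sumR (d - 1) w.

Definition InSimplex (d : nat) (w : nat -> R) : Prop :=
  (forall i, (d - 1 <= i)%nat -> w i = 0) /\
  (forall i, (i < d - 1)%nat -> 0 <= w i) /\
  sumR (d - 1) w <= 1.

Definition maxcoord (d : nat) (w : nat -> R) : R :=
  fold_right Rmax (wlast d w) (map w (seq 0 (d - 1))).

Definition ConvexOnSimplex (d : nat) (f : (nat -> R) -> R) : Prop :=
  forall w1 w2 t, InSimplex d w1 -> InSimplex d w2 -> 0 <= t <= 1 ->
    f (fun i => t * w1 i + (1 - t) * w2 i) <= t * f w1 + (1 - t) * f w2.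

Definition InClassA (d : nat) (A : (nat -> R) -> R) : Prop :=
  ConvexOnSimplex d A /\
  forall w, InSimplex d w ->
    1 / INR d <= A w /\ A w <= 1 /\ maxcoord d w <= A w.

Fixpoint tuples (n m : nat) : list (list nat) :=
  match n with
  | O => [[]]
  | S n' => flat_map (fun a => map (cons a) (tuples n' m)) (seq 0 (S m))
  end.

Definition Gamma (d k : nat) : list (list nat) :=
  filter (fun a => Nat.leb (list_sum a) k) (tuples (d - 1) k).

Definition alpha_vec (k : nat) (a : list nat) : nat -> R :=
  fun i => INR (nth i a 0%nat) / INR k.

(* b_alpha(w;k), with alpha_d = k - sum alpha_i *)
Definition bern_basis (d k : nat) (a : list nat) (w : nat -> R) : R :=
  INR (fact k) /
    (prodR (d - 1) (fun i => INR (fact (nth i a 0%nat))) *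
     INR (fact (k - list_sum a))) *
  prodR (d - 1) (fun i => w i ^ (nth i a 0%nat)) *
  wlast d w ^ (k - list_sum a).

Definition Bern (d k : nat) (A : (nat -> R) -> R) (w : nat -> R) : R :=
  fold_right Rplus 0 (map (fun a => A (alpha_vec k a) * bern_basis d k a w) (Gamma d k)).

(* vertices: v_0 = 0, v_r = e_r (r = 1..d-1), i.e. coordinate index r-1 *)
Definition vertex (r : nat) : nat -> R :=
  fun i => if Nat.eqb r (S i) then 1 else 0.

Definition DirDeriv (f : (nat -> R) -> R) (w u : nat -> R) (l : R) : Prop :=
  derivable_pt_lim (fun t => f (fun i => w i + t * u i)) 0 l.

(* Main.v *)
Require Import Defs.
From Stdlib Require Import Reals Lra Lia List Arith FunctionalExtensionality.
Import ListNotations.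
Open Scope R_scope.

Definition Lin (L : (nat -> R) -> R) : Prop :=
  forall a b u1 u2, L (fun i => a * u1 i + b * u2 i) = a * L u1 + b * L u2.

Definition Smooth (f : (nat -> R) -> R) : Prop :=
  forall v, exists L, Lin L /\ forall u,
    derivable_pt_lim (fun t => f (fun i => v i + t * u i)) 0 (L u).

Lemma v0 (v u : nat -> R) : (fun i => v i + 0 * u i) = v.
Proof. apply functional_extensionality; intro; ring. Qed.

Lemma dlim_eq f x l l' : derivable_pt_lim f x l -> l = l' -> derivable_pt_lim f x l'.
Proof. intros; subst; auto. Qed.

Lemma smooth_const c : Smooth (fun _ => c).
Proof. intro v. exists (fun _ => 0). split. intros a b u1 u2; ring.
intro u. exact (derivable_pt_lim_const c 0). Qed.

Lemma smooth_coord i : Smooth (fun w => w i).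
Proof. intro v. exists (fun u => u i). split. intros a b u1 u2; reflexivity.
intro u.
pose proof (derivable_pt_lim_mult _ _ _ _ _ (derivable_pt_lim_id 0) (derivable_pt_lim_const (u i) 0)) as H1.
pose proof (derivable_pt_lim_plus _ _ _ _ _ (derivable_pt_lim_const (v i) 0) H1) as H2.
eapply dlim_eq. exact H2. cbv [fct_cte id]. ring. Qed.

Lemma smooth_mult f g : Smooth f -> Smooth g -> Smooth (fun w => f w * g w).
Proof. intros Hf Hg v. destruct (Hf v) as [Lf [Lf1 Lf2]]. destruct (Hg v) as [Lg [Lg1 Lg2]].
exists (fun u => Lf u * g v + f v * Lg u). split.
- intros a b u1 u2. rewrite Lf1, Lg1. ring.
- intro u. eapply dlim_eq.
  + exact (derivable_pt_lim_mult _ _ _ _ _ (Lf2 u) (Lg2 u)).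
  + cbv beta. rewrite (v0 v u). ring.
Qed.

Lemma smooth_plus f g : Smooth f -> Smooth g -> Smooth (fun w => f w + g w).
Proof. intros Hf Hg v. destruct (Hf v) as [Lf [Lf1 Lf2]]. destruct (Hg v) as [Lg [Lg1 Lg2]].
exists (fun u => Lf u + Lg u). split.
- intros a b u1 u2. rewrite Lf1, Lg1. ring.
- intro u. exact (derivable_pt_lim_plus _ _ _ _ _ (Lf2 u) (Lg2 u)).
Qed.

Lemma smooth_minus f g : Smooth f -> Smooth g -> Smooth (fun w => f w - g w).
Proof. intros Hf Hg v. destruct (Hf v) as [Lf [Lf1 Lf2]]. destruct (Hg v) as [Lg [Lg1 Lg2]].
exists (fun u => Lf u - Lg u). split.
- intros a b u1 u2. rewrite Lf1, Lg1. ring.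
- intro u. exact (derivable_pt_lim_minus _ _ _ _ _ (Lf2 u) (Lg2 u)).
Qed.

Lemma smooth_pow f n : Smooth f -> Smooth (fun w => f w ^ n).
Proof. intro Hf. induction n. - exact (smooth_const 1). - exact (smooth_mult _ _ Hf IHn). Qed.

Lemma smooth_sumR n (F : nat -> (nat -> R) -> R) :
  (forall i, Smooth (F i)) -> Smooth (fun w => sumR n (fun i => F i w)).
Proof. intro H. induction n; simpl. exact (smooth_const 0). exact (smooth_plus _ _ IHn (H n)). Qed.

Lemma smooth_prodR n (F : nat -> (nat -> R) -> R) :
  (forall i, Smooth (F i)) -> Smooth (fun w => prodR n (fun i => F i w)).
Proof. intro H. induction n; simpl. exact (smooth_const 1). exact (smooth_mult _ _ IHn (H n)). Qed.

Lemma smooth_fold (l : list (list nat)) (F : list nat -> (nat -> R) -> R) :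
  (forall a, Smooth (F a)) -> Smooth (fun w => fold_right Rplus 0 (map (fun a => F a w) l)).
Proof. intro H. induction l; simpl. exact (smooth_const 0). exact (smooth_plus _ _ (H a) IHl). Qed.

Lemma smooth_wlast d : Smooth (wlast d).
Proof. unfold wlast. apply (smooth_minus (fun _ => 1) (fun w => sumR (d-1) (fun i => w i))).
apply smooth_const. apply (smooth_sumR (d-1) (fun i w => w i)). intro; apply smooth_coord. Qed.

Lemma smooth_Bern d k A : Smooth (Bern d k A).
Proof. unfold Bern.
apply (smooth_fold (Gamma d k) (fun a w => A (alpha_vec k a) * bern_basis d k a w)).
intro a. apply (smooth_mult (fun _ => A (alpha_vec k a)) (bern_basis d k a)). apply smooth_const.
unfold bern_basis.
apply smooth_mult. apply smooth_mult. apply smooth_const.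
apply (smooth_prodR (d-1) (fun i w => w i ^ nth i a 0%nat)). intro i.
apply smooth_pow, smooth_coord.
apply smooth_pow, smooth_wlast.
Qed.

Lemma sumR_lin n a b f g : sumR n (fun m => a * f m + b * g m) = a * sumR n f + b * sumR n g.
Proof. induction n; simpl; [ring| rewrite IHn; ring]. Qed.

Lemma sumR_le n f g : (forall i, (i < n)%nat -> f i <= g i) -> sumR n f <= sumR n g.
Proof. induction n; intro H; simpl. lra. apply Rplus_le_compat. apply IHn; intros; apply H; lia. apply H; lia. Qed.

Lemma sumR_ext n f g : (forall i, (i < n)%nat -> f i = g i) -> sumR n f = sumR n g.
Proof. induction n; intro H; simpl. lra. rewrite IHn, H; auto. Qed.

Lemma sumR_shift n f : sumR (S n) f = f O + sumR n (fun i => f (S i)).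
Proof. induction n. simpl; ring. change (sumR (S (S n)) f) with (sumR (S n) f + f (S n)). rewrite IHn. simpl. ring. Qed.

Lemma sumR_ind n f m : sumR n (fun r => f r * (if Nat.eqb r m then 1 else 0)) = if Nat.ltb m n then f m else 0.
Proof. induction n; simpl. reflexivity. rewrite IHn.
destruct (Nat.eqb_spec n m); destruct (Nat.ltb_spec m n); destruct (Nat.ltb_spec m (S n)); try lia; subst; ring. Qed.

Lemma sumR_ind2 n p : sumR n (fun r => if Nat.eqb p r then 1 else 0) = if Nat.ltb p n then 1 else 0.
Proof. induction n; simpl. reflexivity. rewrite IHn.
destruct (Nat.eqb_spec p n); destruct (Nat.ltb_spec p n); destruct (Nat.ltb_spec p (S n)); try lia; subst; ring. Qed.

Definition lam (d : nat) (w : nat -> R) (j : nat) : R :=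
  match j with O => wlast d w | S r => w r end.

Lemma lam_aff d x y a b j : a + b = 1 -> lam d (fun m => a * x m + b * y m) j = a * lam d x j + b * lam d y j.
Proof. intro H. destruct j; simpl. unfold wlast. rewrite sumR_lin. replace b with (1-a) by lra. ring. reflexivity. Qed.

Lemma sum_lam d w : (1 <= d)%nat -> sumR d (lam d w) = 1.
Proof. intro H. destruct d. lia. rewrite sumR_shift.
change (sumR d (fun i => lam (S d) w (S i))) with (sumR d w). simpl lam. unfold wlast.
replace (S d - 1)%nat with d by lia. ring. Qed.

Lemma lam_nonneg d w j : InSimplex d w -> (j < d)%nat -> 0 <= lam d w j.
Proof. intros [H1 [H2 H3]] Hj. destruct j; simpl. unfold wlast; lra. apply H2; lia. Qed.

Lemma lam_vertex d i j : (i < d)%nat -> (j < d)%nat -> lam d (vertex i) j = if Nat.eqb i j then 1 else 0.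
Proof. intros Hi Hj. destruct j as [|r].
- simpl. unfold wlast. destruct i as [|p].
  + rewrite (sumR_ext _ _ (fun _ => 0)) by (intros; reflexivity).
    assert (forall n, sumR n (fun _ => 0) = 0) as Z by (induction n; simpl; [|rewrite IHn]; ring).
    rewrite Z. simpl. ring.
  + rewrite (sumR_ext _ _ (fun r => if Nat.eqb p r then 1 else 0)) by (intros; reflexivity).
    rewrite sumR_ind2. destruct (Nat.ltb_spec p (d-1)); [|lia]. simpl. ring.
- reflexivity.
Qed.

Lemma vertex_simplex d j : (1 <= d)%nat -> (j < d)%nat -> InSimplex d (vertex j).
Proof. intros Hd Hj. split; [|split].
- intros i Hi. unfold vertex. destruct (Nat.eqb_spec j (S i)); [lia|reflexivity].
- intros i Hi. unfold vertex. destruct (Nat.eqb j (S i)); lra.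
- pose proof (lam_vertex d j 0 Hj ltac:(lia)) as H. simpl in H. unfold wlast in H.
  destruct (Nat.eqb j 0); lra.
Qed.

Lemma simplex_comb d x y a b : 0 <= a -> 0 <= b -> a + b = 1 -> InSimplex d x -> InSimplex d y ->
  InSimplex d (fun m => a * x m + b * y m).
Proof. intros Ha Hb Hab [X1 [X2 X3]] [Y1 [Y2 Y3]]. split; [|split].
- intros i Hi. rewrite X1, Y1 by auto. ring.
- intros i Hi. specialize (X2 i Hi). specialize (Y2 i Hi). nra.
- rewrite sumR_lin. nra.
Qed.

Lemma fold_max_ge b l x : In x l \/ x = b -> x <= fold_right Rmax b l.
Proof. induction l; simpl; intros [H|H].
- contradiction. - subst; lra.
- destruct H as [H|H]. subst; apply Rmax_l. eapply Rle_trans; [apply IHl; auto|apply Rmax_r].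
- eapply Rle_trans; [apply IHl; auto|apply Rmax_r].
Qed.

Lemma lam_le_max d w j : (j < d)%nat -> lam d w j <= maxcoord d w.
Proof. intro Hj. unfold maxcoord. destruct j as [|r].
- apply fold_max_ge; right; reflexivity.
- apply fold_max_ge; left. simpl. apply in_map. apply in_seq. lia.
Qed.

Lemma fold_max_le b l X : b <= X -> (forall x, In x l -> x <= X) -> fold_right Rmax b l <= X.
Proof. induction l; simpl; intros Hb H. auto. apply Rmax_lub. apply H; auto. apply IHl; auto. Qed.

Lemma max_le_lam d w X : (1 <= d)%nat -> (forall j, (j < d)%nat -> lam d w j <= X) -> maxcoord d w <= X.
Proof. intros Hd H. unfold maxcoord. apply fold_max_le. apply (H 0%nat). lia.
intros x Hx. apply in_map_iff in Hx. destruct Hx as [r [<- Hr]]. apply in_seq in Hr.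
apply (H (S r)). lia. Qed.

Lemma sum_lam_vertex d w m : (1 <= d)%nat -> InSimplex d w -> sumR d (fun i => lam d w i * vertex i m) = w m.
Proof. intros Hd Hw. destruct d as [|d]. lia. rewrite sumR_shift.
rewrite (sumR_ext d _ (fun r => w r * (if Nat.eqb r m then 1 else 0))) by (intros; reflexivity).
rewrite sumR_ind. unfold vertex at 1. simpl (Nat.eqb 0 (S m)).
destruct (Nat.ltb_spec m d). ring. destruct Hw as [H1 _]. rewrite H1 by lia. ring. Qed.

Lemma decomp d w j : (1 <= d)%nat -> InSimplex d w -> forall m,
  w m - vertex j m = sumR d (fun i => lam d w i * (vertex i m - vertex j m)).
Proof. intros Hd Hw m.
rewrite (sumR_ext d _ (fun i => 1 * (lam d w i * vertex i m) + (- vertex j m) * lam d w i)) by (intros; ring).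
rewrite sumR_lin, sum_lam, sum_lam_vertex by auto. ring. Qed.

Lemma Lin_zero L u : Lin L -> (forall m, u m = 0) -> L u = 0.
Proof. intros HL Hu. assert (E : u = fun i => 0 * u i + 0 * u i)
  by (apply functional_extensionality; intro; rewrite Hu; ring).
rewrite E, HL. ring. Qed.

Lemma Lin_sum L n c U : Lin L ->
  L (fun m => sumR n (fun i => c i * U i m)) = sumR n (fun i => c i * L (U i)).
Proof. intro HL. induction n.
- simpl. apply Lin_zero; auto.
- simpl. rewrite <- IHn.
  transitivity (L (fun i => 1 * (fun m => sumR n (fun i0 => c i0 * U i0 m)) i + c n * U n i)).
  + f_equal. apply functional_extensionality; intro; cbv beta; ring.
  + rewrite (HL 1 (c n) (fun m => sumR n (fun i0 => c i0 * U i0 m)) (U n)). ring.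
Qed.

Lemma deriv_le (g : R -> R) l M : derivable_pt_lim g 0 l ->
  (forall t, 0 < t <= 1 -> (g t - g 0) / t <= M) -> l <= M.
Proof. intros Hd Hb. destruct (Rle_lt_dec l M) as [|Hlt]; auto. exfalso.
destruct (Hd (l - M) ltac:(lra)) as [del Hdel].
pose proof (cond_pos del) as Hdp.
set (t := Rmin (del/2) 1).
assert (Ht1 : 0 < t) by (apply Rmin_glb_lt; lra).
assert (Ht2 : t <= 1) by apply Rmin_r.
assert (Ht3 : t <= del/2) by apply Rmin_l.
assert (Hn : t <> 0) by lra.
assert (Ha : Rabs t < del) by (rewrite Rabs_right; lra).
specialize (Hdel t Hn Ha). rewrite Rplus_0_l in Hdel.
apply Rabs_def2 in Hdel. specialize (Hb t ltac:(lra)). lra. Qed.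

Lemma deriv_ge (g : R -> R) l M : derivable_pt_lim g 0 l ->
  (forall t, 0 < t <= 1 -> M <= (g t - g 0) / t) -> M <= l.
Proof. intros Hd Hb. destruct (Rle_lt_dec M l) as [|Hlt]; auto. exfalso.
destruct (Hd (M - l) ltac:(lra)) as [del Hdel].
pose proof (cond_pos del) as Hdp.
set (t := Rmin (del/2) 1).
assert (Ht1 : 0 < t) by (apply Rmin_glb_lt; lra).
assert (Ht2 : t <= 1) by apply Rmin_r.
assert (Ht3 : t <= del/2) by apply Rmin_l.
assert (Hn : t <> 0) by lra.
assert (Ha : Rabs t < del) by (rewrite Rabs_right; lra).
specialize (Hdel t Hn Ha). rewrite Rplus_0_l in Hdel.
apply Rabs_def2 in Hdel. specialize (Hb t ltac:(lra)). lra. Qed.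

Lemma div_le a t M : 0 < t -> a <= t * M -> a / t <= M.
Proof. intros. apply Rmult_le_reg_l with t; auto. replace (t * (a / t)) with a by (field; lra). auto. Qed.

Lemma div_ge a t M : 0 < t -> t * M <= a -> M <= a / t.
Proof. intros. apply Rmult_le_reg_l with t; auto. replace (t * (a / t)) with a by (field; lra). auto. Qed.

Theorem mainTheorem5 (d k : nat) (A : (nat -> R) -> R) :
  (2 <= d)%nat -> (1 <= k)%nat ->
  InClassA d A ->
  ConvexOnSimplex d (Bern d k A) ->
  (forall j, (j < d)%nat -> Bern d k A (vertex j) = 1) ->
  ((forall w, InSimplex d w -> maxcoord d w <= Bern d k A w) <->
   (forall i j, (i < d)%nat -> (j < d)%nat -> i <> j ->
      exists l, DirDeriv (Bern d k A) (vertex j)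
                  (fun m => vertex i m - vertex j m) l /\ -1 <= l)).
Proof.
intros Hd Hk HA Hconv Hvert.
set (B := Bern d k A) in *.
assert (HS : Smooth B) by apply smooth_Bern.
split.
- intros Hmax i j Hi Hj Hij.
  destruct (HS (vertex j)) as [L [HL HD]].
  set (u := fun m => vertex i m - vertex j m).
  exists (L u). split. apply HD.
  apply (deriv_ge _ _ _ (HD u)).
  intros t Ht. cbv beta. rewrite (v0 (vertex j) u). rewrite Hvert by auto.
  assert (Hp : (fun i0 => vertex j i0 + t * u i0) = (fun m => (1-t) * vertex j m + t * vertex i m))
    by (apply functional_extensionality; intro; unfold u; ring).
  rewrite Hp.
  assert (Hin : InSimplex d (fun m => (1-t) * vertex j m + t * vertex i m)).
  { apply simplex_comb; try lra; apply vertex_simplex; lia. }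
  assert (Hl : lam d (fun m => (1-t) * vertex j m + t * vertex i m) j = 1 - t).
  { rewrite lam_aff by lra. rewrite !lam_vertex by auto. rewrite Nat.eqb_refl.
    destruct (Nat.eqb_spec i j); [contradiction|]. ring. }
  pose proof (Hmax _ Hin). pose proof (lam_le_max d (fun m => (1-t) * vertex j m + t * vertex i m) j Hj).
  apply div_ge; lra.
- intros Hder w Hw.
  apply max_le_lam; [lia|]. intros j Hj.
  destruct (HS (vertex j)) as [L [HL HD]].
  set (u := fun m => w m - vertex j m).
  assert (H1 : L u <= B w - 1).
  { apply (deriv_le _ _ _ (HD u)). intros t Ht. cbv beta. rewrite (v0 (vertex j) u). rewrite Hvert by auto.
    assert (Hp : (fun i => vertex j i + t * u i) = (fun i => t * w i + (1-t) * vertex j i))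
      by (apply functional_extensionality; intro; unfold u; ring).
    rewrite Hp.
    pose proof (Hconv w (vertex j) t Hw (vertex_simplex d j ltac:(lia) Hj) ltac:(lra)) as Hc.
    rewrite Hvert in Hc by auto.
    apply div_le; lra. }
  assert (E : L u = sumR d (fun i => lam d w i * L (fun m => vertex i m - vertex j m))).
  { assert (Hu : u = fun m => sumR d (fun i => lam d w i * (vertex i m - vertex j m))).
    { apply functional_extensionality; intro m. unfold u. apply decomp; auto; lia. }
    rewrite Hu. exact (Lin_sum L d (lam d w) (fun i m => vertex i m - vertex j m) HL). }
  assert (H2 : lam d w j - 1 <= L u).
  { rewrite E.
    apply Rle_trans with (sumR d (fun i => (-1) * lam d w i + 1 * (lam d w i * (if Nat.eqb i j then 1 else 0)))).
    - rewrite sumR_lin, sum_lam by lia. rewrite sumR_ind.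
      destruct (Nat.ltb_spec j d); [|lia]. lra.
    - apply sumR_le. intros i Hi.
      pose proof (lam_nonneg d w i Hw Hi) as Hn.
      destruct (Nat.eqb_spec i j).
      + subst i. rewrite (Lin_zero L _ HL) by (intro; ring). lra.
      + destruct (Hder i j Hi Hj n) as [l [Hl1 Hl2]].
        unfold DirDeriv in Hl1.
        pose proof (uniqueness_limite _ _ _ _ Hl1 (HD (fun m => vertex i m - vertex j m))) as Eq.
        rewrite <- Eq. nra. }
  lra.
Qed.
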